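(* Let $l\le n$ be positive integers and let $\mathbb F\subseteq\mathbb D_1^n$ satisfy $\mathrm{lh}(\mathbb F)\le l$. If $|\mathbb F|<2^l-1$, then there exists an index set $\mathbb F_0\subseteq\mathbb D_1^n\setminus\mathbb F$ of cardinality $2^l-1-|\mathbb F|$ such that $\mathrm{lh}(\mathbb F\cup\mathbb F_0)\le l$.
   Context: Dyadic intervals: $\Delta_k^{(j)}:=[\frac{j-1}{2^k},\frac{j}{2^k})$ for $k\ge0$. Dyadic tree $\mathbb D:=\{(k,j):k\ge1;\ j=1,\dots,2^{k-1}\}$; $\mathbb D_1^n:=\{(k,j):k=1,\dots,n;\ j=1,\dots,2^{k-1}\}$. Branches: $\mathbb B(t):=\{(k,j)\in\mathbb D:t\in\Delta_{k-1}^{(j)}\}$ for $t\in[0,1)$; local height of a finite $\mathbb F\subseteq\mathbb D$: $\mathrm{lh}(\mathbb F):=\max_{t\in[0,1)}|\mathbb F\cap\mathbb B(t)|$. *)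

(* Defs.v *)
From HB Require Import structures.
From mathcomp Require Import all_boot all_order all_algebra.
From mathcomp Require Import finmap boolp Rstruct.
From Stdlib Require Rdefinitions.
Notation R := Rdefinitions.R.
Set Implicit Arguments. Unset Strict Implicit. Unset Printing Implicit Defensive.
Import Order.TTheory GRing.Theory Num.Theory.
Local Open Scope fset_scope.

Definition in_dyadic (k j : nat) (t : R) : bool :=
  (((j.-1)%:R / (2 ^ k)%:R <= t) && (t < j%:R / (2 ^ k)%:R))%R.

Definition inD (x : nat * nat) : bool :=
  (1 <= x.1) && (1 <= x.2 <= 2 ^ x.1.-1).

Definition inD1n (n : nat) (x : nat * nat) : bool :=
  (1 <= x.1 <= n) && (1 <= x.2 <= 2 ^ x.1.-1).

Definition inB (t : R) (x : nat * nat) : bool :=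
  inD x && in_dyadic x.1.-1 x.2 t.

Definition branch_card (F : {fset nat * nat}) (t : R) : nat :=
  #|` [fset x in F | inB t x] |.

(* local height lh(F) = max_{t in [0,1)} |F ∩ B(t)|, realised as the
   largest value m <= |F| attained by some t in [0,1). *)
Definition lh (F : {fset nat * nat}) : nat :=
  \max_(m < (#|` F|).+1 |
        `[< exists t : R, ((0 <= t)%R /\ (t < 1)%R) /\ branch_card F t = m >]) m.

(* Main.v *)
Require Import Defs.
From HB Require Import structures.
From mathcomp Require Import all_boot all_order all_algebra.
From mathcomp Require Import finmap boolp Rstruct.
From mathcomp Require Import zify.
Import Order.TTheory GRing.Theory Num.Theory.
Local Open Scope fset_scope.
Set Implicit Arguments. Unset Strict Implicit.

Definition lo n (y : nat * nat) := (y.2.-1 * 2 ^ (n - y.1))%N.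
Definition hi n (y : nat * nat) := (y.2 * 2 ^ (n - y.1))%N.
Definition onpath n m y := ((lo n y <= m) && (m < hi n y))%N.
Definition insub n (v y : nat * nat) :=
  [&& (v.1 <= y.1)%N, (lo n v <= lo n y)%N & (hi n y <= hi n v)%N].
Definition ch1 (v : nat * nat) := (v.1.+1, v.2.*2.-1).
Definition ch2 (v : nat * nat) := (v.1.+1, v.2.*2).

Lemma pow_split n k k' : (k <= k')%N -> (k' <= n)%N ->
  2 ^ (n - k) = (2 ^ (n - k') * 2 ^ (k' - k))%N.
Proof. move=> h1 h2; rewrite -expnD; congr (_ ^ _); lia. Qed.

Lemma same_level n v y : inD1n n v -> inD1n n y -> y.1 = v.1 ->
  (lo n v <= lo n y)%N -> (hi n y <= hi n v)%N -> y = v.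
Proof.
case: v => k j; case: y => k' j'; rewrite /inD1n /lo /hi /= => hv hy e.
subst k'.
have hu : (0 < 2 ^ (n - k))%N by rewrite expn_gt0.
rewrite !leq_pmul2r // => h1 h2.
congr pair; lia.
Qed.

Lemma split_sub n v y : inD1n n v -> inD1n n y -> (v.1 < y.1)%N ->
  insub n v y -> insub n (ch1 v) y || insub n (ch2 v) y.
Proof.
case: v => k j; case: y => k' j'; rewrite /inD1n /insub /lo /hi /ch1 /ch2 /=.
move=> hv hy hk.
have E1 : 2 ^ (n - k) = (2 ^ (n - k') * 2 ^ (k' - k.+1) * 2)%N.
  rewrite -mulnA -expnSr -!expnD; congr (_ ^ _); lia.
have E2 : 2 ^ (n - k.+1) = (2 ^ (n - k') * 2 ^ (k' - k.+1))%N.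
  rewrite -!expnD; congr (_ ^ _); lia.
rewrite E1 E2.
have hu : (0 < 2 ^ (n - k'))%N by rewrite expn_gt0.
move: hu; set u := 2 ^ (n - k'); set P := 2 ^ (k' - k.+1) => hu.
have [a ea] : exists a, j = a.+1 by exists j.-1; lia.
have [a' ea'] : exists a, j' = a.+1 by exists j'.-1; lia.
subst j j'.
rewrite hk /= -!mul2n.
move=> /and3P [_ h1 h2].
case: (ltnP (a' * u) ((2 * a).+1 * (u * P)))%N => h3.
- apply/orP; left; apply/andP; split.
    by apply: leq_trans h1; rewrite (_ : (2 * a) * (u * P) = a * (u * P * 2))%N //; lia.
  have h4 : (a' < (2 * a).+1 * P)%N.
    by rewrite -(ltn_pmul2r hu); rewrite (_ : (2 * a).+1 * P * u = (2 * a).+1 * (u * P))%N //; lia.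
  rewrite (_ : (2 * a).+1 * (u * P) = (2 * a).+1 * P * u)%N; last by lia.
  by rewrite leq_pmul2r.
- apply/orP; right; apply/andP; split => //.
  by rewrite (_ : (2 * a.+1) * (u * P) = a.+1 * (u * P * 2))%N //; lia.
Qed.

Definition csub n (F : {fset nat * nat}) v m :=
  #|` [fset y in F | insub n v y && onpath n m y] |.
Definition ssub n (F : {fset nat * nat}) v :=
  #|` [fset y in F | insub n v y] |.
Definition chm n v m := if (m < hi n (ch1 v))%N then ch1 v else ch2 v.

Lemma insub_refl n v : insub n v v.
Proof. by rewrite /insub !leqnn. Qed.

Lemma insub_trans n u v w : insub n u v -> insub n v w -> insub n u w.
Proof.
rewrite /insub => /and3P [h1 h2 h3] /and3P [h4 h5 h6].
by rewrite (leq_trans h1 h4) (leq_trans h2 h5) (leq_trans h6 h3).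
Qed.

Lemma ch_inD n v : inD1n n v -> (v.1 < n)%N -> inD1n n (ch1 v) && inD1n n (ch2 v).
Proof.
case: v => k j; rewrite /inD1n /ch1 /ch2 /= => /andP [/andP [h1 h2] /andP [h3 h4]] hk.
have e : 2 ^ k = (2 ^ k.-1 * 2)%N by rewrite -expnSr; congr (_ ^ _); lia.
rewrite e; lia.
Qed.

Lemma insub_ch n v : inD1n n v -> (v.1 < n)%N -> insub n v (ch1 v) && insub n v (ch2 v).
Proof.
case: v => k j; rewrite /inD1n /insub /lo /hi /ch1 /ch2 /= => /andP [/andP [h1 h2] /andP [h3 h4]] hk.
have e : 2 ^ (n - k) = (2 ^ (n - k.+1) * 2)%N by rewrite -expnSr; congr (_ ^ _); lia.
rewrite e; move: (2 ^ (n - k.+1)) => u.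
have [a ea] : exists a, j = a.+1 by exists j.-1; lia.
subst j. rewrite -!mul2n.
rewrite (_ : (2 * a.+1).-1 = (2 * a).+1)%N; last by lia.
rewrite !succnK.
rewrite (_ : 2 * a * u = a * (u * 2))%N; last by lia.
rewrite (_ : 2 * a.+1 * u = a.+1 * (u * 2))%N; last by lia.
rewrite !leqnn !leqnSn /= andbT.
apply/andP; split; nia.
Qed.

Lemma onpath_sub n m c y : insub n c y -> onpath n m y -> onpath n m c.
Proof.
rewrite /insub /onpath => /and3P [_ h1 h2] /andP [h3 h4].
by rewrite (leq_trans h1 h3) (leq_trans h4 h2).
Qed.

Lemma chm_eq n v m c : (c = ch1 v \/ c = ch2 v) -> onpath n m c -> c = chm n v m.
Proof.
rewrite /chm /onpath => [[->|->]] /andP [h1 h2].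
  by rewrite h2.
have : ~~ (m < hi n (ch1 v))%N.
  by rewrite -leqNgt; move: h1; rewrite /lo /hi /ch1 /ch2 /=.
by move/negbTE => ->.
Qed.

Lemma step_cnt n (F : {fset nat * nat}) v m : (forall y, y \in F -> inD1n n y) -> inD1n n v -> (v.1 < n)%N ->
  (csub n F v m <= (v \in F) + csub n F (chm n v m) m)%N.
Proof.
move=> hF hv hk.
set B := [fset y in F | insub n (chm n v m) y && onpath n m y].
have key : forall y, y \in F -> insub n v y -> onpath n m y -> y != v -> y \in B.
  move=> y yF hvy hmy ne.
  rewrite !inE yF /= hmy andbT.
  have hy := hF y yF.
  have lt : (v.1 < y.1)%N.
    move: hvy; rewrite /insub => /and3P [h1 h2 h3].
    rewrite ltn_neqAle h1 andbT; apply/negP => /eqP e.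
    by move: ne; rewrite (same_level hv hy (esym e) h2 h3) eqxx.
  case/orP: (split_sub hv hy lt hvy) => hc.
    by rewrite -(chm_eq (or_introl erefl) (onpath_sub hc hmy)).
  by rewrite -(chm_eq (or_intror erefl) (onpath_sub hc hmy)).
case vF: (v \in F).
  apply: leq_trans (_ : #|` v |` B| <= _)%N.
    apply: fsubset_leq_card; apply/fsubsetP => y /[!inE] /andP [yF /andP [h1 h2]].
    case: eqP => [//|/eqP ne] /=; move: (key y yF h1 h2 ne); by rewrite !inE.
  by rewrite cardfsU1; case: (v \notin B).
rewrite add0n; apply: fsubset_leq_card; apply/fsubsetP => y /[!inE] /andP [yF /andP [h1 h2]].
have ne : y != v by apply/negP => /eqP e; by rewrite -e yF in vF.
move: (key y yF h1 h2 ne); by rewrite !inE.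
Qed.

Lemma chm_prop n v m : inD1n n v -> (v.1 < n)%N ->
  inD1n n (chm n v m) /\ (chm n v m).1 = v.1.+1.
Proof.
move=> hv hk; case/andP: (ch_inD hv hk) => h1 h2.
by rewrite /chm; case: ifP.
Qed.

Lemma lo_lt_hi n y : inD1n n y -> (lo n y < hi n y)%N.
Proof.
case: y => k j; rewrite /inD1n /lo /hi /= => /andP [_ /andP [h _]].
rewrite ltn_pmul2r ?expn_gt0 //; lia.
Qed.

Lemma pathcount n (F : {fset nat * nat}) d : (forall y, y \in F -> inD1n n y) ->
  forall v m, (v.1 + d = n)%N -> inD1n n v -> (csub n F v m <= d.+1)%N.
Proof.
move=> hF; elim: d => [|d IH] v m e hv.
  rewrite -(cardfs1 v); apply: fsubset_leq_card; apply/fsubsetP => y /[!inE] /andP [yF /andP [h1 h2]].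
  have hy := hF y yF.
  move: (h1); rewrite /insub => /and3P [l1 l2 l3].
  have e2 : y.1 = v.1 by move: (hy); rewrite /inD1n => /andP [/andP [_ b] _]; apply/eqP; rewrite eqn_leq l1 andbT (leq_trans b) // -e addn0.
  by rewrite (same_level hv hy e2 l2 l3).
have hk : (v.1 < n)%N by lia.
apply: leq_trans (step_cnt m hF hv hk) _.
case: (chm_prop m hv hk) => h1 h2.
have := IH (chm n v m) m ltac:(lia) h1.
case: (v \in F) => /=; lia.
Qed.

Lemma ssub_split n (F : {fset nat * nat}) v : (forall y, y \in F -> inD1n n y) ->
  inD1n n v -> (v.1 < n)%N -> v \in F ->
  (1 + ssub n F (ch1 v) + ssub n F (ch2 v) <= ssub n F v)%N.
Proof.
move=> hF hv hk vF.
case/andP: (insub_ch hv hk) => s1 s2.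
set A1 := [fset y in F | insub n (ch1 v) y].
set A2 := [fset y in F | insub n (ch2 v) y].
have dis : A1 `&` A2 = fset0.
  apply/fsetP => y; rewrite in_fset0 in_fsetI !inE.
  apply/negP => /andP [/andP [yF i1] /andP [_ i2]].
  have := lo_lt_hi (hF y yF).
  move: i1 i2; rewrite /insub => /and3P [_ _ a] /and3P [_ b _].
  have E : hi n (ch1 v) = lo n (ch2 v) by [].
  lia.
have nin : v \notin A1 `|` A2.
  rewrite in_fsetU !inE /insub /ch1 /ch2 /=.
  by rewrite !ltnn !andbF.
have := cardfsUI A1 A2; rewrite dis cardfs0 addn0 => e.
apply: leq_trans (_ : #|` v |` (A1 `|` A2)| <= _)%N.
  rewrite cardfsU1 nin /= e addnA; exact: leqnn.
apply: fsubset_leq_card; apply/fsubsetP => y.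
rewrite in_fset1U in_fsetU => /or3P [/eqP ->| |].
- by rewrite !inE vF insub_refl.
- rewrite !inE => /andP [yF h]; by rewrite yF (insub_trans s1 h).
- rewrite !inE => /andP [yF h]; by rewrite yF (insub_trans s2 h).
Qed.

Lemma csub_le_ssub n F v m : (csub n F v m <= ssub n F v)%N.
Proof.
apply: fsubset_leq_card; apply/fsubsetP => y /[!inE] /andP [yF /andP [h1 h2]].
by rewrite yF h1.
Qed.

Lemma ssub_ch n F v c : insub n v c -> (ssub n F c <= ssub n F v)%N.
Proof.
move=> s; apply: fsubset_leq_card; apply/fsubsetP => y /[!inE] /andP [yF h].
by rewrite yF (insub_trans s h).
Qed.

Lemma core n (F : {fset nat * nat}) d : (forall y, y \in F -> inD1n n y) ->
  forall v b, (v.1 + d = n)%N -> inD1n n v -> (b <= d.+1)%N ->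
  (forall x, inD1n n x -> insub n v x -> x \notin F ->
     exists m, onpath n m x /\ (b <= csub n F v m)%N) ->
  (2 ^ b - 1 <= ssub n F v)%N.
Proof.
move=> hF; elim: d => [|d IH] v b e hv hb H.
  apply: (@leq_trans b); first by case: b hb {H} => [|[|]].
  case vF: (v \in F).
    apply: leq_trans hb _; rewrite -(cardfs1 v); apply: fsubset_leq_card.
    by apply/fsubsetP => y /[!inE] /eqP ->; rewrite vF insub_refl.
  have [m [_ hm]] := H v hv (insub_refl n v) (negbT vF).
  exact: leq_trans hm (csub_le_ssub _ _ _ _).
have hk : (v.1 < n)%N by lia.
case/andP: (ch_inD hv hk) => c1D c2D.
case/andP: (insub_ch hv hk) => s1 s2.
have child : forall c b', (c = ch1 v \/ c = ch2 v) -> (b' + (v \in F) <= b)%N ->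
    forall x, inD1n n x -> insub n c x -> x \notin F ->
     exists m, onpath n m x /\ (b' <= csub n F c m)%N.
  move=> c b' hc hbb x hx hcx xF.
  have s : insub n v c by case: hc => ->.
  have [m [hm hbm]] := H x hx (insub_trans s hcx) xF.
  exists m; split => //.
  have ec := chm_eq hc (onpath_sub hcx hm).
  have := step_cnt m hF hv hk; rewrite -ec.
  move: hbb hbm; case: (v \in F) => /=; lia.
case vF: (v \in F).
  case: b hb H child => [|b'] hb H child; first by rewrite expn0 subnn.
  have ee : ((ch1 v).1 + d = n)%N by rewrite /=; lia.
  have ee2 : ((ch2 v).1 + d = n)%N by rewrite /=; lia.
  have hb2 : (b' <= d.+1)%N by lia.
  have hb3 : (b' + (v \in F) <= b'.+1)%N by rewrite vF addn1.
  have i1 := IH (ch1 v) b' ee c1D hb2 (child _ _ (or_introl erefl) hb3).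
  have i2 := IH (ch2 v) b' ee2 c2D hb2 (child _ _ (or_intror erefl) hb3).
  have sp := ssub_split hF hv hk vF.
  move: i1 i2 sp; rewrite expnS; have := expn_gt0 2 b'; lia.
have [m [hm hbm]] := H v hv (insub_refl n v) (negbT vF).
have hb' : (b <= d.+1)%N.
  case: (chm_prop m hv hk) => h1 h2.
  have hh : ((chm n v m).1 + d = n)%N by rewrite h2; lia.
  have := @pathcount n F d hF _ m hh h1.
  have := step_cnt m hF hv hk; rewrite vF /=; lia.
have ee : ((ch1 v).1 + d = n)%N by rewrite /=; lia.
have hb3 : (b + (v \in F) <= b)%N by rewrite vF addn0.
have i1 := IH (ch1 v) b ee c1D hb' (child _ _ (or_introl erefl) hb3).
exact: leq_trans i1 (ssub_ch _ s1).
Qed.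

Definition cnt n (G : {fset nat * nat}) m := #|` [fset y in G | onpath n m y] |.

Lemma insub_root n y : inD1n n y -> insub n (1, 1) y.
Proof.
case: y => k j; rewrite /inD1n /insub /lo /hi /= => /andP [/andP [h1 h2] /andP [h3 h4]].
rewrite h1 mul1n /=.
have -> : 2 ^ (n - 1) = (2 ^ k.-1 * 2 ^ (n - k))%N by rewrite -expnD; congr (_ ^ _); lia.
by rewrite leq_pmul2r ?expn_gt0.
Qed.

Lemma root_inD n : (0 < n)%N -> inD1n n (1, 1).
Proof. by rewrite /inD1n /= => ->. Qed.

Lemma csub_root n F m : (forall y, y \in F -> inD1n n y) -> csub n F (1, 1) m = cnt n F m.
Proof.
move=> hF; rewrite /csub /cnt; congr (#|` _|); apply/fsetP => y; rewrite !inE.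
by case yF: (y \in F) => //=; rewrite insub_root // hF.
Qed.

Lemma ssub_root n F : (forall y, y \in F -> inD1n n y) -> ssub n F (1, 1) = #|` F|.
Proof.
move=> hF; rewrite /ssub; congr (#|` _|); apply/fsetP => y; rewrite !inE.
by case yF: (y \in F) => //=; rewrite insub_root // hF.
Qed.

Lemma greedy n l (F : {fset nat * nat}) : (forall y, y \in F -> inD1n n y) ->
  (0 < l)%N -> (l <= n)%N -> (#|` F| < 2 ^ l - 1)%N ->
  exists x, [/\ inD1n n x, x \notin F & forall m, onpath n m x -> (cnt n F m < l)%N].
Proof.
move=> hF l0 ln hc.
case: (pselect (exists x, [/\ inD1n n x, x \notin F & forall m, onpath n m x -> (cnt n F m < l)%N])) => // hn.
exfalso.
have H : forall x, inD1n n x -> insub n (1, 1) x -> x \notin F ->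
     exists m, onpath n m x /\ (l <= csub n F (1, 1) m)%N.
  move=> x hx _ xF.
  case: (pselect (exists m, onpath n m x /\ (l <= csub n F (1, 1) m)%N)) => // hm.
  exfalso; apply: hn; exists x; split => // m om.
  rewrite -csub_root // ltnNge; apply/negP => hl; apply: hm; by exists m.
have e1 : ((1, 1).1 + n.-1 = n)%N by rewrite /=; lia.
have e2 : (0 < n)%N by lia.
have e3 : (l <= n.-1.+1)%N by lia.
have := @core n F n.-1 hF (1, 1) l e1 (root_inD e2) e3 H.
rewrite ssub_root //; lia.
Qed.

Lemma cnt_add n F x m : (cnt n (x |` F) m <= onpath n m x + cnt n F m)%N.
Proof.
rewrite /cnt.
case ox: (onpath n m x) => /=.
  apply: leq_trans (_ : #|` x |` [fset y in F | onpath n m y]| <= _)%N.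
    apply: fsubset_leq_card; apply/fsubsetP => y /[!inE] /andP [/orP [->|->] ->] //.
    by rewrite orbT.
  by rewrite cardfsU1; case: (_ \notin _).
apply: fsubset_leq_card; apply/fsubsetP => y /[!inE] /andP [/orP [/eqP e|->] oy] //.
by rewrite e ox in oy.
Qed.

Lemma iterate n l r : (0 < l)%N -> (l <= n)%N -> forall F : {fset nat * nat},
  (forall y, y \in F -> inD1n n y) -> (forall m, cnt n F m <= l)%N ->
  (#|` F| + r <= 2 ^ l - 1)%N ->
  exists F0 : {fset nat * nat},
    (forall x, x \in F0 -> inD1n n x && (x \notin F)) /\ #|` F0| = r /\
    (forall m, cnt n (F `|` F0) m <= l)%N.
Proof.
move=> l0 ln; elim: r => [|r IH] F hF hl hc.
  exists fset0; split; first by move=> x; rewrite in_fset0.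
  by rewrite cardfs0 fsetU0.
have [x [hx xF hxm]] := greedy hF l0 ln ltac:(lia).
have hF' : forall y, y \in x |` F -> inD1n n y.
  by move=> y; rewrite in_fset1U => /orP [/eqP ->|/hF].
have hl' : forall m, (cnt n (x |` F) m <= l)%N.
  move=> m; apply: leq_trans (@cnt_add n F x m) _.
  case ox: (onpath n m x) => /=; last exact: hl.
  by rewrite add1n; apply: hxm.
have hc' : (#|` x |` F| + r <= 2 ^ l - 1)%N by rewrite cardfsU1 xF; lia.
have [F0 [h1 [h2 h3]]] := IH _ hF' hl' hc'.
exists (x |` F0); split; [|split].
- move=> y; rewrite in_fset1U => /orP [/eqP ->|/h1]; first by rewrite hx xF.
  by rewrite in_fset1U negb_or => /andP [-> /andP [_ ->]].
- rewrite cardfsU1 h2.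
  have -> : x \notin F0 by apply/negP => /h1; rewrite in_fset1U eqxx /= andbF.
  by [].
- by move=> m; rewrite fsetUA (fsetUC F); apply: h3.
Qed.

Lemma nat_le_iff (u : R) m a : (m%:R <= u < m.+1%:R)%R -> ((a%:R <= u)%R = (a <= m)%N).
Proof.
move=> /andP [h1 h2]; apply/idP/idP => h.
  by rewrite -ltnS -(ltr_nat R); apply: le_lt_trans h h2.
by apply: le_trans h1; rewrite ler_nat.
Qed.

Lemma nat_lt_iff (u : R) m b : (m%:R <= u < m.+1%:R)%R -> ((u < b%:R)%R = (m < b)%N).
Proof.
move=> /andP [h1 h2]; apply/idP/idP => h.
  by rewrite -(ltr_nat R); apply: le_lt_trans h1 h.
by apply: lt_le_trans h2 _; rewrite ler_nat.
Qed.

Lemma div_le (t : R) a P Q : (0 < P)%N -> (0 < Q)%N ->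
  ((a%:R / P%:R <= t)%R = ((a * Q)%:R <= t * (P * Q)%:R)%R).
Proof.
move=> hP hQ.
by rewrite ler_pdivrMr ?ltr0n // !natrM mulrA ler_pM2r ?ltr0n.
Qed.

Lemma div_lt (t : R) a P Q : (0 < P)%N -> (0 < Q)%N ->
  ((t < a%:R / P%:R)%R = (t * (P * Q)%:R < (a * Q)%:R)%R).
Proof.
move=> hP hQ.
by rewrite ltr_pdivlMr ?ltr0n // !natrM mulrA ltr_pM2r ?ltr0n.
Qed.

Lemma bridge n (t : R) m y :
  (m%:R <= t * (2 ^ (n - 1))%:R < m.+1%:R)%R -> inD1n n y -> inB t y = onpath n m y.
Proof.
case: y => k j hm hy.
have hD : inD (k, j) by move: hy; rewrite /inD1n /inD /=; case/andP=> /andP [-> _] ->.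
rewrite /inB hD /= /in_dyadic /onpath /lo /hi /=.
move: hy; rewrite /inD1n /= => /andP [/andP [h1 h2] _].
have E : (2 ^ (n - 1) = 2 ^ k.-1 * 2 ^ (n - k))%N by rewrite -expnD; congr (_ ^ _); lia.
rewrite E in hm.
rewrite (div_le _ _ (expn_gt0 2 k.-1) (expn_gt0 2 (n - k))).
rewrite (div_lt _ _ (expn_gt0 2 k.-1) (expn_gt0 2 (n - k))).
by rewrite (nat_le_iff _ hm) (nat_lt_iff _ hm).
Qed.

Lemma bc_cnt n (G : {fset nat * nat}) (t : R) m : (forall y, y \in G -> inD1n n y) ->
  (m%:R <= t * (2 ^ (n - 1))%:R < m.+1%:R)%R -> branch_card G t = cnt n G m.
Proof.
move=> hG hm; rewrite /branch_card /cnt; congr (#|` _|); apply/fsetP => y; rewrite !inE.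
by case yG: (y \in G) => //=; rewrite (bridge hm (hG y yG)).
Qed.

Lemma exists_m n (t : R) : (0 <= t)%R -> (t < 1)%R ->
  exists m, (m < 2 ^ (n - 1))%N /\ (m%:R <= t * (2 ^ (n - 1))%:R < m.+1%:R)%R.
Proof.
move=> t0 t1.
have hN : (0 < (2 ^ (n - 1))%:R :> R)%R by rewrite ltr0n expn_gt0.
have u0 : (0 <= t * (2 ^ (n - 1))%:R)%R by rewrite mulr_ge0 // ltW.
have hi := truncn_itv u0.
exists (Num.Def.trunc (t * (2 ^ (n - 1))%:R)); split => //.
rewrite -(ltr_nat R); case/andP: hi => h1 _; apply: le_lt_trans h1 _.
by rewrite -[X in (_ < X)%R]mul1r ltr_pM2r.
Qed.

Lemma t_of_m n m : (m < 2 ^ (n - 1))%N ->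
  let t : R := (m%:R / (2 ^ (n - 1))%:R)%R in
  [/\ (0 <= t)%R, (t < 1)%R & (m%:R <= t * (2 ^ (n - 1))%:R < m.+1%:R)%R].
Proof.
move=> hm t.
have hN : (0 < (2 ^ (n - 1))%:R :> R)%R by rewrite ltr0n expn_gt0.
have -> : (t * (2 ^ (n - 1))%:R = m%:R)%R by rewrite /t divfK // gt_eqF.
split.
- by rewrite /t divr_ge0 // ltW.
- by rewrite /t ltr_pdivrMr // mul1r ltr_nat.
- by rewrite lexx ltr_nat ltnSn.
Qed.

Theorem corollary4p2 (l n : nat) (F : {fset nat * nat}) :
  (0 < l)%N -> (l <= n)%N ->
  (forall x, x \in F -> inD1n n x) ->
  (lh F <= l)%N ->
  (#|` F| < 2 ^ l - 1)%N ->
  exists F0 : {fset nat * nat},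
    (forall x, x \in F0 -> inD1n n x && (x \notin F)) /\
    #|` F0| = (2 ^ l - 1 - #|` F|)%N /\
    (lh (F `|` F0) <= l)%N.
Proof.
move=> l0 ln hF hlh hc.
have hl : forall m, (cnt n F m <= l)%N.
  move=> m.
  case: (ltnP m (2 ^ (n - 1))) => hm.
    have [t0 t1 tm] := t_of_m hm.
    set t := (m%:R / (2 ^ (n - 1))%:R)%R in t0 t1 tm.
    rewrite -(bc_cnt hF tm).
    apply: leq_trans hlh.
    have hb : (branch_card F t < (#|` F|).+1)%N.
      by rewrite ltnS; apply: fsubset_leq_card; apply/fsubsetP => y /[!inE] /andP [].
    have := @leq_bigmax_cond _
      (fun i : 'I_(#|` F|).+1 => `[< exists t : R, ((0 <= t)%R /\ (t < 1)%R) /\ branch_card F t = i >])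
      (fun i => nat_of_ord i) (Ordinal hb).
    by apply; apply/asboolP; exists t.
  rewrite /cnt (_ : [fset y in F | onpath n m y] = fset0) ?cardfs0 //.
  apply/fsetP => y; rewrite in_fset0 !inE; apply/negP => /andP [yF oy].
  have := insub_root (hF y yF); rewrite /insub => /and3P [_ _ h].
  move: oy; rewrite /onpath => /andP [_ h2].
  have : (m < hi n (1, 1))%N by apply: leq_trans h2 h.
  by rewrite /hi /= mul1n ltnNge hm.
have hc' : (#|` F| + (2 ^ l - 1 - #|` F|) <= 2 ^ l - 1)%N by lia.
have [F0 [h1 [h2 h3]]] := iterate l0 ln hF hl hc'.
exists F0; split => //; split => //.
have hG : forall y, y \in F `|` F0 -> inD1n n y.
  by move=> y; rewrite in_fsetU => /orP [/hF|/h1 /andP []].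
rewrite /lh; apply/bigmax_leqP => i /asboolP [t [[t0 t1] <-]].
have [m [_ hm]] := exists_m n t0 t1.
by rewrite (bc_cnt hG hm).
Qed.
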